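(* Let $G$ be a hyperbolic group and $\partial_\infty G$ its boundary at infinity, equipped with any visual metric $d$. Then $(\partial_\infty G,d)$ admits a finite expanding cover: there are finitely many open sets $U_1,\dots,U_N$ covering $\partial_\infty G$, maps $f_i:U_i\to\partial_\infty G$ and constants $L_i>1$ such that $d(f_i(x),f_i(y))\ge L_i\,d(x,y)$ for all $x,y\in U_i$.
   Context: A finitely generated group $G$ is hyperbolic if its Cayley graph $\Gamma(G,S)$ for some finite symmetric generating set $S$ (with path metric) is $\delta$-hyperbolic for some $\delta\ge0$. $\partial_\infty G=\partial_\infty\Gamma(G,S)$ is the Gromov boundary (equivalence classes of geodesic rays from a base point, rays equivalent when at finite Hausdorff distance), with its natural topology; Gromov product $(x,y)_o=\frac12(d(x,o)+d(y,o)-d(x,y))$, extended to the boundary by $(x,y)_o=\sup\liminf_{i,j}(x_i,y_j)_o$ over sequences representing $x,y$. A metric $d$ on $\partial_\infty G$ is visual (with base point $o$ and parameter $a>1$) if it induces the natural topology and $C_1a^{-(x,y)_o}\le d(x,y)\le C_2a^{-(x,y)_o}$ for some $C_1,C_2>0$ and all distinct $x,y$. *)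

(* Defs.v *)
From HB Require Import structures.
From mathcomp Require Import all_boot all_order all_algebra.
From mathcomp Require Import all_classical all_reals all_analysis.
From Stdlib Require List.
Set Implicit Arguments. Unset Strict Implicit. Unset Printing Implicit Defensive.
Import Order.TTheory GRing.Theory Num.Theory.
Local Open Scope ring_scope.
Local Open Scope classical_set_scope.

Record group_on (G : Type) := GroupOn {
  gmul : G -> G -> G;
  ginv : G -> G;
  gone : G;
  gmulA : forall x y z, gmul x (gmul y z) = gmul (gmul x y) z;
  gmul1 : forall x, gmul gone x = x;
  gmulV : forall x, gmul (ginv x) x = gone }.

Section Hyperbolic.
Variables (R : realType) (G : Type) (gr : group_on G) (S : seq G).

Definition S_word (w : seq G) : Prop := forall s, List.In s w -> List.In s S.
Definition word_val (w : seq G) : G := foldr (gmul gr) (gone gr) w.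

Definition symmetric_gen_set : Prop :=
  (forall s, List.In s S -> List.In (ginv gr s) S) /\
  (forall g, exists w, S_word w /\ word_val w = g).

(* word metric = path metric of the Cayley graph Gamma(G,S) restricted to vertices *)
Definition wdist (g h : G) : R :=
  inf [set v | exists w, [/\ S_word w, word_val w = gmul gr (ginv gr g) h & v = (size w)%:R]].

Definition gprod (o x y : G) : R := (wdist x o + wdist y o - wdist x y) / 2.

(* delta-hyperbolicity (Gromov four-point condition) *)
Definition hyperbolic_Cayley : Prop :=
  exists delta : R, 0 <= delta /\
    forall o x y z, Num.min (gprod o x y) (gprod o y z) - delta <= gprod o x z.

Definition geod_ray (g : nat -> G) : Prop :=
  g 0%N = gone gr /\ forall i j : nat, (i <= j)%N -> wdist (g i) (g j) = (j - i)%:R.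

Definition ray_equiv (g h : nat -> G) : Prop :=
  exists K : R, (forall i, exists j, wdist (g i) (h j) <= K) /\
                (forall j, exists i, wdist (g i) (h j) <= K).

Definition bdry := {A : set (nat -> G) |
  exists g, geod_ray g /\ A = [set h | geod_ray h /\ ray_equiv g h]}.

(* a sequence x_i in G represents the boundary point xi (i.e. converges to it) *)
Definition represents (xi : bdry) (x : nat -> G) : Prop :=
  exists g, proj1_sig xi g /\
    forall M : R, exists N : nat, forall i j : nat, (N <= i)%N -> (N <= j)%N ->
      M <= gprod (gone gr) (x i) (g j).

Definition liminf2 (u : nat -> nat -> \bar R) : \bar R :=
  ereal_sup (range (fun N : nat =>
    ereal_inf [set v | exists i j : nat, [/\ (N <= i)%N, (N <= j)%N & v = u i j]])).

Definition gprod_bd (o : G) (xi eta : bdry) : \bar R :=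
  ereal_sup [set v | exists x y, [/\ represents xi x, represents eta y &
            v = liminf2 (fun i j => (gprod o (x i) (y j))%:E)]].

Definition bd_open (U : set bdry) : Prop :=
  forall xi, U xi -> exists r : R, forall eta, (r%:E < gprod_bd (gone gr) xi eta)%E -> U eta.

Definition is_metric (d : bdry -> bdry -> R) : Prop :=
  (forall x y, 0 <= d x y) /\ (forall x y, d x y = 0 <-> x = y) /\
  (forall x y, d x y = d y x) /\ (forall x y z, d x z <= d x y + d y z).

Definition metric_open (d : bdry -> bdry -> R) (U : set bdry) : Prop :=
  forall xi, U xi -> exists e : R, 0 < e /\ forall eta, d xi eta < e -> U eta.

Definition visual_metric (d : bdry -> bdry -> R) : Prop :=
  is_metric d /\ (forall U, bd_open U <-> metric_open d U) /\
  exists (o : G) (a C1 C2 : R), 1 < a /\ 0 < C1 /\ 0 < C2 /\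
    forall x y : bdry, x <> y -> exists p : R, gprod_bd o x y = p%:E /\
      C1 * a `^ (- p) <= d x y /\ d x y <= C2 * a `^ (- p).

End Hyperbolic.

(* Main.v *)
Set Warnings "-all".
Require Import Defs.
From HB Require Import structures.
From mathcomp Require Import all_boot all_order all_algebra.
From mathcomp Require Import all_classical all_reals all_analysis.
From mathcomp Require Import ring lra zify.
Import Order.TTheory GRing.Theory Num.Theory.
Local Open Scope ring_scope.
Local Open Scope classical_set_scope.

Section Liminf.
Variable R : realType.
Local Open Scope ereal_scope.

Definition infset (u : nat -> nat -> \bar R) N :=
  ereal_inf [set v | exists i j : nat, [/\ (N <= i)%N, (N <= j)%N & v = u i j]].

Lemma infset_le u N i j : (N <= i)%N -> (N <= j)%N -> infset u N <= u i j.
Proof. by move=> hi hj; apply: ereal_inf_lbound; exists i, j. Qed.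

Lemma infset_mono u N N' : (N <= N')%N -> infset u N <= infset u N'.
Proof.
move=> hN; apply: le_ereal_inf => v [i [j [hi hj ->]]].
by exists i, j; split => //; [exact: leq_trans hN hi|exact: leq_trans hN hj].
Qed.

Lemma infset_liminf u N : infset u N <= liminf2 u.
Proof. by apply: ereal_sup_ubound; exists N. Qed.

Lemma liminf2_ge (u : nat -> nat -> R) (M : R) :
  (exists N, forall i j, (N <= i)%N -> (N <= j)%N -> (M <= u i j)%R) ->
  M%:E <= liminf2 (fun i j => (u i j)%:E).
Proof.
case=> N HN; apply: le_trans (infset_liminf _ N).
apply: le_ereal_inf_tmp => v [i [j [hi hj ->]]].
by rewrite lee_fin; apply: HN.
Qed.

Lemma liminf2_gt (u : nat -> nat -> R) (M : R) :
  M%:E < liminf2 (fun i j => (u i j)%:E) ->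
  exists N, forall i j, (N <= i)%N -> (N <= j)%N -> (M < u i j)%R.
Proof.
move=> /ereal_sup_gt [y [N _ <-] Hy]; exists N => i j hi hj.
rewrite -lte_fin; apply: lt_le_trans Hy _.
by apply: ereal_inf_lbound; exists i, j.
Qed.

Lemma liminf2_shift (u w : nat -> nat -> R) (c : R) :
  (exists N0, forall i j, (N0 <= i)%N -> (N0 <= j)%N -> (u i j <= w i j + c)%R) ->
  liminf2 (fun i j => (u i j)%:E) <= liminf2 (fun i j => (w i j)%:E) + c%:E.
Proof.
case=> N0 HN; apply: ge_ereal_sup => _ [N _ <-].
change (infset (fun i j => (u i j)%:E) N <= liminf2 (fun i j => (w i j)%:E) + c%:E).
set N' := maxn N N0.
apply: le_trans (@infset_mono (fun i j => (u i j)%:E) N (maxn N N0) (leq_maxl N N0)) _.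
rewrite -/N'.
apply: le_trans (leeD2r _ (infset_liminf _ N')).
rewrite -leeBlDr //.
apply: le_ereal_inf_tmp => v [i [j [hi hj ->]]].
rewrite leeBlDr //.
apply: le_trans (@infset_le (fun i j => (u i j)%:E) N' i j hi hj) _.
rewrite -EFinD lee_fin; apply: HN.
  exact: leq_trans (leq_maxr _ _) hi.
exact: leq_trans (leq_maxr _ _) hj.
Qed.

End Liminf.

Section Konig.
Variables (A : Type) (Gm : nat -> nat -> A) (B : nat -> list A) (Nb : nat -> nat).
Hypothesis HB : forall T j, (Nb T <= j)%N -> List.In (Gm j T) (B T).

Definition Inf (J : set nat) := forall N, exists j, (N <= j)%N /\ J j.

Lemma pigeon (l : list A) (F : nat -> A) (J : set nat) : Inf J ->
  (forall j, J j -> List.In (F j) l) -> exists c, Inf (J `&` [set j | F j = c]).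
Proof.
elim: l J => [|a l IH] J HJ Hin.
  by have [j [_ /Hin []]] := HJ 0%N.
case: (pselect (Inf (J `&` [set j | F j = a]))) => [H|H]; first by exists a.
have [N HN] : exists N, forall j, (N <= j)%N -> J j -> F j <> a.
  apply: contrapT => HH; apply: H => N.
  apply: contrapT => HN; apply: HH; exists N => j hj Jj Fj; apply: HN.
  by exists j.
have H1 : Inf (J `&` [set j | (N <= j)%N]).
  move=> M; have [j [hj Jj]] := HJ (maxn M N).
  by exists j; split; [exact: leq_trans (leq_maxl _ _) hj | split => //; exact: leq_trans (leq_maxr _ _) hj].
have H2 : forall j, (J `&` [set j | (N <= j)%N]) j -> List.In (F j) l.
  move=> j [Jj hj]; case: (Hin j Jj) => // Ha.
  by exfalso; apply: (HN j hj Jj).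
have [c Hc] := IH _ H1 H2.
exists c => M; have [j [hj [[Jj _] Fj]]] := Hc M.
by exists j.
Qed.

Lemma step (J : set nat) T : exists c, Inf J -> Inf (J `&` [set j | Gm j T = c]).
Proof.
case: (pselect (Inf J)) => HJ; last by exists (Gm 0%N 0%N).
have H1 : Inf (J `&` [set j | (Nb T <= j)%N]).
  move=> M; have [j [hj Jj]] := HJ (maxn M (Nb T)).
  by exists j; split; [exact: leq_trans (leq_maxl _ _) hj | split => //; exact: leq_trans (leq_maxr _ _) hj].
have H2 : forall j, (J `&` [set j | (Nb T <= j)%N]) j -> List.In (Gm j T) (B T).
  by move=> j [_ hj]; apply: HB.
have [c Hc] := @pigeon (B T) (fun j => Gm j T) _ H1 H2.
exists c => _ M; have [j [hj [[Jj _] Fj]]] := Hc M.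
by exists j.
Qed.

Fixpoint Js (pk : set nat * nat -> A) T : set nat :=
  match T with
  | 0 => setT
  | T'.+1 => Js pk T' `&` [set j | Gm j T' = pk (Js pk T', T')]
  end.

Lemma konig : exists r : nat -> A, forall T N, exists j,
  (N <= j)%N /\ forall t, (t <= T)%N -> Gm j t = r t.
Proof.
have [pk Hpk] := choice (fun (x : set nat * nat) => step x.1 x.2).
have Hinf : forall T, Inf (Js pk T).
  elim=> [|T IH] /=; first by move=> N; exists N.
  exact: (Hpk (Js pk T, T)).
exists (fun T => pk (Js pk T, T)).
have Hm : forall T j, Js pk T.+1 j -> forall t, (t <= T)%N -> Gm j t = pk (Js pk t, t).
  elim=> [|T IH] j /= Hj t ht.
    by move: ht; rewrite leqn0 => /eqP ->; case: Hj.
  case: Hj => Hj1 Hj2.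
  move: ht; rewrite leq_eqVlt => /orP [/eqP -> //|ht].
  by apply: IH.
move=> T N; have [j [hj Jj]] := Hinf T.+1 N.
by exists j; split => // t ht; apply: Hm Jj t ht.
Qed.

End Konig.
Set Warnings "-all".
Require Import Defs.
From HB Require Import structures.
From mathcomp Require Import all_boot all_order all_algebra.
From mathcomp Require Import all_classical all_reals all_analysis.
From mathcomp Require Import lra.
Import Order.TTheory GRing.Theory Num.Theory.
Local Open Scope ring_scope.
Local Open Scope classical_set_scope.
Section Hyp.
Variables (R : realType) (G : Type) (gr : group_on G) (S : seq G).
Hypothesis hS : symmetric_gen_set gr S.

Local Notation mul := (gmul gr).
Local Notation inv := (ginv gr).
Local Notation one := (gone gr).
Local Notation dist := (wdist R gr S).

Lemma mulgV x : mul x (inv x) = one.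
Proof.
set y := inv x.
rewrite -[LHS](gmul1 gr) -(gmulV gr y) -gmulA.
by rewrite (gmulA gr y x y) (gmulV gr x) (gmul1 gr) (gmulV gr).
Qed.

Lemma mulg1 x : mul x one = x.
Proof. by rewrite -(gmulV gr x) gmulA mulgV gmul1. Qed.

Lemma inv_uniq a b : mul a b = one -> a = inv b.
Proof.
move=> H; rewrite -[a]mulg1 -(mulgV b) gmulA H gmul1 //.
Qed.

Lemma invM x y : inv (mul x y) = mul (inv y) (inv x).
Proof.
symmetry; apply: inv_uniq.
by rewrite -gmulA (gmulA gr (inv x) x y) gmulV gmul1 gmulV.
Qed.

Lemma invK x : inv (inv x) = x.
Proof. symmetry; apply: inv_uniq; exact: mulgV. Qed.

Lemma mulKg h x : mul h (mul (inv h) x) = x.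
Proof. by rewrite gmulA mulgV gmul1. Qed.

Lemma mulVKg h x : mul (inv h) (mul h x) = x.
Proof. by rewrite gmulA gmulV gmul1. Qed.

Lemma word_val_cat w1 w2 : word_val gr (w1 ++ w2) = mul (word_val gr w1) (word_val gr w2).
Proof.
elim: w1 => [|s w IH] /=; first by rewrite gmul1.
by rewrite IH gmulA.
Qed.

Lemma S_word_cat w1 w2 : S_word S w1 -> S_word S w2 -> S_word S (w1 ++ w2).
Proof.
move=> H1 H2 s Hs; case: (List.in_app_or _ _ _ Hs) => ?; [exact: H1|exact: H2].
Qed.

Lemma word_inv w : S_word S w -> exists w', [/\ S_word S w', size w' = size w &
  word_val gr w' = inv (word_val gr w)].
Proof.
elim: w => [|s w IH] Hw /=.
  exists [::]; split; [by move=> ? [] | by [] |].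
  by apply: inv_uniq; rewrite gmul1.
have [|w' [H1 H2 H3]] := IH.
  by move=> t Ht; apply: Hw; right.
exists (w' ++ [:: inv s]); split.
- apply: S_word_cat => // t [<-|[]].
  by apply: hS.1; apply: Hw; left.
- by rewrite size_cat /= H2 addn1.
- by rewrite word_val_cat H3 /= mulg1 invM.
Qed.

Definition Wset g h := [set v : R | exists w, [/\ S_word S w,
   word_val gr w = mul (inv g) h & v = (size w)%:R]].

Lemma wdistE g h : dist g h = inf (Wset g h).
Proof. by []. Qed.

Lemma Wset_lb g h : lbound (Wset g h) 0.
Proof. by move=> v [w [_ _ ->]]. Qed.

Lemma wdist_le w g h : S_word S w -> word_val gr w = mul (inv g) h ->
  dist g h <= (size w)%:R.
Proof.
move=> H1 H2; rewrite wdistE.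
have := @ge_inf R (Wset g h).
have hl : has_lbound (Wset g h) by exists 0; exact: Wset_lb.
move=> /(_ hl); apply; by exists w.
Qed.

Lemma wdist_attained g h : exists w, [/\ S_word S w,
   word_val gr w = mul (inv g) h & dist g h = (size w)%:R].
Proof.
pose P := fun n => exists w, [/\ S_word S w, word_val gr w = mul (inv g) h & size w = n].
have ex : exists n, `[< P n >].
  have [w [Hw1 Hw2]] := hS.2 (mul (inv g) h).
  by exists (size w); apply/asboolP; exists w.
case: (ex_minnP ex) => n /asboolP [w [H1 H2 H3]] Hmin.
exists w; split => //.
apply/le_anti/andP; split; first exact: wdist_le.
rewrite wdistE; apply: lb_le_inf; first by exists (size w)%:R, w.
move=> v [w' [H1' H2' ->]]; rewrite ler_nat H3; apply: Hmin.
by apply/asboolP; exists w'.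
Qed.

Lemma wdist_ge0 g h : 0 <= dist g h.
Proof. by have [w [_ _ ->]] := wdist_attained g h. Qed.

Lemma wdist_nat g h : exists n : nat, dist g h = n%:R.
Proof. by have [w [_ _ ->]] := wdist_attained g h; exists (size w). Qed.

Lemma wdist_sym g h : dist g h = dist h g.
Proof.
suff H : forall g h, dist g h <= dist h g by apply/le_anti; rewrite !H.
move=> a b.
have [w [H1 H2 H3]] := wdist_attained b a.
have [w' [H1' H2' H3']] := word_inv _ H1.
rewrite H3 -H2'; apply: wdist_le => //.
by rewrite H3' H2 invM invK.
Qed.

Lemma wdist_tri x y z : dist x z <= dist x y + dist y z.
Proof.
have [w1 [H1 H2 H3]] := wdist_attained x y.
have [w2 [H1' H2' H3']] := wdist_attained y z.
rewrite H3 H3' -natrD -size_cat; apply: wdist_le; first exact: S_word_cat.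
by rewrite word_val_cat H2 H2' -gmulA mulKg.
Qed.

Lemma wdist_xx x : dist x x = 0.
Proof.
apply/le_anti/andP; split; last exact: wdist_ge0.
have -> : (0 : R) = (size (@nil G))%:R by [].
apply: wdist_le; first by move=> ? [].
by rewrite gmulV.
Qed.

Lemma wdist_mul c x y : dist (mul c x) (mul c y) = dist x y.
Proof.
by rewrite /wdist invM -gmulA (gmulA gr (inv c) c y) gmulV gmul1.
Qed.


Local Notation gp := (gprod R gr S).
Local Notation ray := (geod_ray R gr S).

Lemma gp_sym o x y : gp o x y = gp o y x.
Proof. by rewrite /gprod (wdist_sym x y) (addrC (wdist _ _ _ x o)). Qed.

Lemma gp_ge0 o x y : 0 <= gp o x y.
Proof.
rewrite /gprod; have := wdist_tri x o y; rewrite (wdist_sym o y).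
have := wdist_ge0 x o; lra.
Qed.

Lemma gp_base p q a b : gp p a b <= gp q a b + dist p q.
Proof.
rewrite /gprod.
have := wdist_tri a q p; have := wdist_tri b q p; rewrite (wdist_sym q p); lra.
Qed.

Lemma gp_ident h a b : gp h a b + gp one a h + gp one b h = gp one a b + dist h one.
Proof. rewrite /gprod (wdist_sym b h) (wdist_sym a h); lra. Qed.

Lemma gp_mul c o x y : gp (mul c o) (mul c x) (mul c y) = gp o x y.
Proof. by rewrite /gprod !wdist_mul. Qed.

Variable delta : R.
Hypothesis delta_ge0 : 0 <= delta.
Hypothesis four : forall o x y z, Num.min (gp o x y) (gp o y z) - delta <= gp o x z.

Lemma hyp2 {M : R} {o x y z : G} : M <= gp o x y -> M <= gp o y z -> M - delta <= gp o x z.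
Proof.
move=> H1 H2; apply: le_trans (four o x y z); rewrite lerD2r.
by rewrite le_min H1 H2.
Qed.

Lemma hyp3 {M : R} {o x y z w : G} : M <= gp o x y -> M <= gp o y z -> M <= gp o z w ->
  M - 2 * delta <= gp o x w.
Proof.
move=> H1 H2 H3.
have H4 := hyp2 H1 H2.
have H5 : M - delta <= gp o z w by have := delta_ge0; lra.
have := hyp2 H4 H5; lra.
Qed.

Lemma gp_close u v : dist u one <= dist v one + dist u v -> 
  dist u one - dist u v <= gp one u v.
Proof. move=> H; rewrite /gprod; lra. Qed.

Lemma gp_close' u v : dist u one - dist u v <= gp one u v.
Proof.
apply: gp_close; have := wdist_tri u v one; lra.
Qed.

Lemma transT {K M : R} {x u v : G} : dist u v <= K -> M <= gp one x u ->
  M <= dist u one - K -> M - delta <= gp one x v.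
Proof.
move=> H1 H2 H3; apply: hyp2 H2 _.
have := gp_close' u v; lra.
Qed.

Lemma ray_norm g t : ray g -> dist (g t) one = t%:R.
Proof.
case=> H0 H; rewrite wdist_sym -H0 H // subn0 //.
Qed.

Lemma ray_dist g i j : ray g -> (i <= j)%N -> dist (g j) (g i) = (j - i)%:R.
Proof. by case=> H0 H hij; rewrite wdist_sym H. Qed.

Lemma gp_ray g n t : ray g -> (n <= t)%N -> gp one (g t) (g n) = n%:R.
Proof.
move=> Hg hnt; rewrite /gprod !ray_norm // ray_dist // natrB //; lra.
Qed.

Lemma archi_nat (x : R) : exists n : nat, x <= n%:R.
Proof.
case: (lerP 0 x) => hx.
  by exists (Num.Def.archi_bound x); apply/ltW/archi_boundP.
by exists 0%N; apply/ltW.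
Qed.

Lemma ray_close u v : ray u -> ray v -> ray_equiv R gr S u v ->
  forall n, dist (u n) (v n) <= 4 * delta.
Proof.
move=> Hu Hv [K [HK _]] n.
have [k Hk] := archi_nat K.
pose t := (n + k)%N.
have [s Hs] := HK t.
have Kge0 : 0 <= K by apply: le_trans Hs; exact: wdist_ge0.
have hts1 := wdist_tri (v s) (u t) one.
have hts2 := wdist_tri (u t) (v s) one.
rewrite (wdist_sym (v s) (u t)) !ray_norm // in hts1.
rewrite !ray_norm // in hts2.
have htR : t%:R = n%:R + k%:R :> R by rewrite natrD.
have hns : (n <= s)%N by rewrite -(ler_nat R); lra.
have hnt : (n <= t)%N by rewrite leq_addr.
have G1 : n%:R <= gp one (u n) (u t) by rewrite gp_sym gp_ray.
have G3 : n%:R <= gp one (v s) (v n) by rewrite gp_ray.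
have G2 : n%:R <= gp one (u t) (v s).
  rewrite /gprod !ray_norm //; lra.
have := hyp3 G1 G2 G3.
rewrite /gprod !ray_norm //; lra.
Qed.


Lemma inv1 : inv one = one.
Proof. by symmetry; apply: inv_uniq; rewrite gmul1. Qed.

Fixpoint words_le (K : nat) : list (seq G) :=
  match K with
  | 0 => [:: [::]]
  | K'.+1 => [::] :: List.flat_map (fun s => List.map (cons s) (words_le K')) S
  end.

Lemma in_words_le K w : S_word S w -> (size w <= K)%N -> List.In w (words_le K).
Proof.
elim: K w => [|K IH] [|s w] //= Hw hs; try by left.
right; apply/List.in_flat_map; exists s; split; first by apply: Hw; left.
apply: List.in_map; apply: IH => // t Ht; apply: Hw; by right.
Qed.

Definition ballL p K := List.map (fun w => mul p (word_val gr w)) (words_le K).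

Lemma in_ballL p y (K : nat) : dist p y <= K%:R -> List.In y (ballL p K).
Proof.
have [w [H1 H2 H3]] := wdist_attained p y.
rewrite H3 ler_nat => hK.
have -> : y = mul p (word_val gr w) by rewrite H2 mulKg.
by apply: List.in_map; apply: in_words_le.
Qed.

Lemma S_word_take t w : S_word S w -> S_word S (take t w).
Proof.
move=> Hw s Hs; apply: Hw; rewrite -(cat_take_drop t w).
by apply: List.in_or_app; left.
Qed.

Lemma S_word_drop t w : S_word S w -> S_word S (drop t w).
Proof.
move=> Hw s Hs; apply: Hw; rewrite -(cat_take_drop t w).
by apply: List.in_or_app; right.
Qed.

Lemma segment y : exists (L : nat) (gam : nat -> G), [/\ dist one y = L%:R,
  gam 0%N = one, gam L = y &
  forall t t', (t <= t')%N -> (t' <= L)%N -> dist (gam t) (gam t') = (t' - t)%:R].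
Proof.
have [w [H1 H2 H3]] := wdist_attained one y.
rewrite inv1 gmul1 in H2.
pose gam t := word_val gr (take t w).
have Hup : forall t t', (t <= t')%N -> (t' <= size w)%N -> dist (gam t) (gam t') <= (t' - t)%:R.
  move=> t t' htt' ht'.
  pose mid := drop t (take t' w).
  have E : take t w ++ mid = take t' w by rewrite -{1}(take_takel w htt') cat_take_drop.
  have hsz : size mid = (t' - t)%N by rewrite size_drop size_takel.
  rewrite -hsz; apply: wdist_le; first by apply: S_word_drop; apply: S_word_take.
  by rewrite /gam -E word_val_cat mulVKg.
have g0 : gam 0%N = one by rewrite /gam take0.
have gL : gam (size w) = y by rewrite /gam take_size.
exists (size w), gam; split => // t t' htt' ht'.
apply/le_anti/andP; split; first exact: Hup.
have htL : (t <= size w)%N := leq_trans htt' ht'.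
have A1 := Hup 0%N t (leq0n t) htL.
have A2 := Hup t' (size w) ht' (leqnn _).
have A3 := wdist_tri one (gam t) y.
have A4 := wdist_tri (gam t) (gam t') y.
rewrite g0 in A1; rewrite gL in A2.
rewrite H3 in A3.
rewrite subn0 in A1; rewrite !natrB // in A2 *.
lra.
Qed.

Lemma seg_close (p : nat -> G) (R0 : R) :
  (forall t t', (t <= t')%N -> dist (p t) (p t') = (t' - t)%:R) ->
  dist one (p 0%N) <= R0 ->
  forall j (L : nat) (gam : nat -> G), dist one (p j) = L%:R -> gam 0%N = one -> gam L = p j ->
  (forall t t', (t <= t')%N -> (t' <= L)%N -> dist (gam t) (gam t') = (t' - t)%:R) ->
  forall t, (t <= j)%N -> t%:R + R0 <= j%:R -> dist (gam t) (p t) <= 3 * R0 + 2 * delta.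
Proof.
move=> Hp HR0 j L gam HL g0 gL Hg t htj htR.
have R0ge0 : 0 <= R0 by apply: le_trans HR0; exact: wdist_ge0.
have Bpj := wdist_tri (p 0%N) one (p j).
have Bpt := wdist_tri (p 0%N) one (p t).
have Bpt' := wdist_tri (p t) (p 0%N) one.
rewrite !Hp // !subn0 (wdist_sym (p 0%N) one) in Bpj Bpt.
rewrite (wdist_sym (p t) (p 0%N)) Hp // subn0 (wdist_sym (p 0%N) one) in Bpt'.
have htL : (t <= L)%N by rewrite -(ler_nat R) -HL; lra.
have gt : dist (gam t) one = t%:R by rewrite wdist_sym -g0 Hg // subn0.
have gtj : dist (gam t) (p j) = (L - t)%:R by rewrite -gL Hg.
have C1 : t%:R - R0 <= gp one (gam t) (p j).
  rewrite /gprod gt gtj (wdist_sym (p j)) HL natrB //; lra.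
have C2 : t%:R - R0 <= gp one (p j) (p t).
  rewrite /gprod (wdist_sym (p j) (p t)) Hp // (wdist_sym (p j)) (wdist_sym (p t)) natrB //; lra.
have := hyp2 C1 C2.
rewrite /gprod gt; lra.
Qed.

Lemma ray_near (p : nat -> G) (R0 : R) :
  (forall t t', (t <= t')%N -> dist (p t) (p t') = (t' - t)%:R) ->
  dist one (p 0%N) <= R0 ->
  exists r, ray r /\ forall t, dist (r t) (p t) <= 3 * R0 + 2 * delta.
Proof.
move=> Hp HR0.
have [F HF] := choice (fun j => segment (p j)).
have [F2 HF2] := choice (fun j => HF j).
have [k0 Hk0] := archi_nat R0.
have [kn Hkn] := archi_nat (3 * R0 + 2 * delta).
pose Gm j t := F2 j t.
have Hcl : forall j t, (t + k0 <= j)%N -> dist (Gm j t) (p t) <= 3 * R0 + 2 * delta.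
  move=> j t hj.
  have [E1 E2 E3 E4] := HF2 j.
  apply: (@seg_close p R0 Hp HR0 j (F j) (F2 j) E1 E2 E3 E4).
    exact: leq_trans (leq_addr _ _) hj.
  rewrite -(ler_nat R) natrD in hj; lra.
have HB : forall T j, (T + k0 <= j)%N -> List.In (Gm j T) (ballL (p T) kn).
  move=> T j hj; apply: in_ballL; rewrite wdist_sym.
  exact: le_trans (Hcl j T hj) Hkn.
have [r Hr] := @konig G Gm (fun T => ballL (p T) kn) (fun T => (T + k0)%N) HB.
have HL : forall j t, (t + k0 <= j)%N -> (t <= F j)%N.
  move=> j t hj; have [E1 _ _ _] := HF2 j.
  have Bpj := wdist_tri (p 0%N) one (p j).
  rewrite Hp // subn0 (wdist_sym (p 0%N) one) E1 in Bpj.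
  rewrite -(ler_nat R) natrD in hj; rewrite -(ler_nat R); lra.
exists r; split; last first.
  move=> t; have [j [hj Hj]] := Hr t (t + k0)%N.
  by rewrite -Hj //; apply: Hcl.
split.
  have [j [_ Hj]] := Hr 0%N 0%N.
  by rewrite -Hj //; have [_ E2 _ _] := HF2 j.
move=> i j' hij.
have [j [hj Hj]] := Hr j' (j' + k0)%N.
rewrite -!Hj // ?(leq_trans hij) //.
have [_ _ _ E4] := HF2 j.
by apply: E4 => //; apply: HL.
Qed.

Definition Tends (x u : nat -> G) := forall M : R, exists N, forall i j,
  (N <= i)%N -> (N <= j)%N -> M <= gp one (x i) (u j).

Lemma tends_trans x u v (K : R) : Tends x u -> (forall t, dist (u t) (v t) <= K) ->
  (forall t, dist (u t) one = t%:R) -> Tends x v.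
Proof.
move=> Hx Huv Hu M.
have [k Hk] := archi_nat (M + delta + K).
have [N HN] := Hx (M + delta).
exists (maxn N k) => i j hi hj.
have hNi : (N <= i)%N by lia.
have hNj : (N <= j)%N by lia.
have hkj : (k <= j)%N by lia.
have H3 : M + delta <= dist (u j) one - K.
  rewrite Hu; have : k%:R <= j%:R :> R by rewrite ler_nat.
  lra.
have := transT (Huv j) (HN i j hNi hNj) H3; lra.
Qed.

Lemma tends_shift x p k h n : Tends x p -> (forall t, mul h (p t) = k (n + t)%N) ->
  Tends (fun i => mul h (x i)) k.
Proof.
move=> Hx Hk M.
have [N HN] := Hx (M + dist h one).
exists (N + n)%N => i j hi hj.
have -> : k j = mul h (p (j - n)%N) by rewrite Hk subnKC //; lia.
have E := gp_mul h one (x i) (p (j - n)%N); rewrite mulg1 in E.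
have B := gp_base h one (mul h (x i)) (mul h (p (j - n)%N)).
have := HN i (j - n)%N ltac:(lia) ltac:(lia).
lra.
Qed.

Lemma requiv_refl g : ray g -> ray_equiv R gr S g g.
Proof. by move=> _; exists 0; split => i; exists i; rewrite wdist_xx. Qed.

Lemma bd_mem (z : bdry R gr S) k : proj1_sig z k ->
  exists g0, [/\ ray g0, ray k, ray_equiv R gr S g0 k &
    proj1_sig z = [set q | ray q /\ ray_equiv R gr S g0 q]].
Proof.
case: z => A [g0 [Hg0 HA]] /= Hk.
by exists g0; rewrite HA in Hk *; case: Hk.
Qed.

Lemma gp_ray_min g N i j : ray g -> (N <= i)%N -> (N <= j)%N -> N%:R <= gp one (g i) (g j).
Proof.
move=> Hg hi hj; case: (leqP i j) => hij.
  by rewrite gp_sym gp_ray // ler_nat.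
by rewrite gp_ray ?ler_nat // ltnW.
Qed.

Lemma tends_self g : ray g -> Tends g g.
Proof.
move=> Hg M; have [N HN] := archi_nat M.
by exists N => i j hi hj; apply: le_trans HN (@gp_ray_min g N i j Hg hi hj).
Qed.

Lemma gbd_self (o : G) (z : bdry R gr S) (M : R) : (M%:E <= gprod_bd o z z)%E.
Proof.
have [g [Hg HA]] := proj2_sig z.
have Hgz : proj1_sig z g by rewrite HA; split => //; exact: requiv_refl.
have Hrep : represents z g by exists g; split => //; exact: tends_self.
apply: le_trans (_ : _ <= liminf2 (fun i j => (gp o (g i) (g j))%:E))%E _.
  apply: liminf2_ge.
  have [N HN] := archi_nat (M + dist one o).
  exists N => i j hi hj.
  have := @gp_ray_min g N i j Hg hi hj; have := gp_base one o (g i) (g j); lra.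
by apply: ereal_sup_ubound; exists g, g; split.
Qed.

Lemma tends_lift (z : bdry R gr S) k r h n (K : R) x' : ray k -> ray r ->
  (forall t, dist (r t) (mul (inv h) (k (n + t)%N)) <= K) ->
  proj1_sig z = [set q | ray q /\ ray_equiv R gr S r q] ->
  represents z x' -> Tends (fun i => mul h (x' i)) k.
Proof.
move=> Hk Hr Hrp Hz [q [Hq Hxq]].
rewrite Hz in Hq; case: Hq => Hq Hrq.
have H1 : Tends x' r.
  apply: (@tends_trans x' q r (4 * delta) Hxq) => t; last exact: ray_norm.
  by rewrite wdist_sym; apply: ray_close.
have H2 : Tends x' (fun t => mul (inv h) (k (n + t)%N)).
  by apply: (@tends_trans x' r _ K H1 Hrp) => t; exact: ray_norm.
by apply: (@tends_shift x' _ k h n H2) => t; exact: mulKg.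
Qed.

Lemma near_h a k h n (R0 : R) : Tends a k -> ray k -> dist (k n) h <= R0 ->
  exists N, forall i, (N <= i)%N -> n%:R - R0 - 2 * delta <= gp one (a i) h.
Proof.
move=> Ha Hk HR0.
have R0ge0 : 0 <= R0 by apply: le_trans HR0; exact: wdist_ge0.
have [Na HNa] := Ha n%:R.
exists Na => i hi.
set t := maxn Na n.
have E1 : n%:R <= gp one (a i) (k t) by apply: HNa => //; exact: leq_maxl.
have E2 : n%:R - R0 - delta <= gp one (k t) h.
  apply: (@transT R0 (n%:R - R0) (k t) (k n) h HR0).
    by rewrite gp_ray //; [lra | exact: leq_maxr].
  by rewrite ray_norm //; lra.
have E1' : n%:R - R0 - delta <= gp one (a i) (k t) by have := delta_ge0; lra.
have := hyp2 E1' E2; lra.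
Qed.

Lemma powR_expR (a x : R) : 1 < a -> a `^ x = expR (x * ln a).
Proof. by move=> ha; rewrite /powR gt_eqF //; lra. Qed.

Lemma powR_ltE (a x y : R) : 1 < a -> (a `^ x < a `^ y) = (x < y).
Proof. by move=> ha; rewrite !powR_expR // ltr_expR ltr_pM2r // ln_gt0. Qed.

Lemma powR_leE (a x y : R) : 1 < a -> (a `^ x <= a `^ y) = (x <= y).
Proof. by move=> ha; rewrite !powR_expR // ler_expR ler_pM2r // ln_gt0. Qed.

Lemma powR_addE (a x y : R) : 1 < a -> a `^ (x + y) = a `^ x * a `^ y.
Proof. by move=> ha; rewrite !powR_expR // mulrDl expRD. Qed.

Lemma In_nth_ex (T : Type) (d : T) (l : list T) x : List.In x l ->
  exists i, (i < size l)%N /\ nth d l i = x.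
Proof.
elim: l => [|y l IH] //= [->|H]; first by exists 0%N.
by have [i [hi <-]] := IH H; exists i.+1.
Qed.

Arguments bd_mem {z k}.
Arguments tends_lift {z k r h n K x'}.
Arguments near_h {a k h n R0}.

Lemma main_sec (d : bdry R gr S -> bdry R gr S -> R) (hd : visual_metric d) :
  exists (N : nat) (U : 'I_N -> set (bdry R gr S))
         (f : 'I_N -> bdry R gr S -> bdry R gr S) (L : 'I_N -> R),
    (forall i, bd_open (U i)) /\
    (forall xi : bdry R gr S, exists i, U i xi) /\
    (forall i, 1 < L i) /\
    (forall i x y, U i x -> U i y -> L i * d x y <= d (f i x) (f i y)).
Proof.
case: hd => [[Hd0 [Hdeq [Hdsym Hdtri]]] [Htop [ob [a [C1 [C2 [ha [hC1 [hC2 Hvis]]]]]]]]].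
pose m := dist ob one.
have m0 : 0 <= m by exact: wdist_ge0.
have dge0 := delta_ge0.
pose R0 := 10 * delta.
pose K1 := 3 * R0 + 2 * delta.
pose Cc := 2 * m + 3 * R0 + 4 * delta.
have lna : 0 < ln a by apply: ln_gt0.
have [n Hn] := archi_nat (Cc + C2 / C1 / ln a + 1).
pose X := a `^ (n%:R - Cc).
pose L := C1 / C2 * X.
have hX : C2 / C1 < X.
  rewrite /X powR_expR //.
  apply: lt_le_trans (expR_ge1Dx _).
  have H1 : C2 / C1 / ln a + 1 <= n%:R - Cc by lra.
  have H2 : (C2 / C1 / ln a + 1) * ln a <= (n%:R - Cc) * ln a by rewrite ler_pM2r.
  rewrite mulrDl divfK ?gt_eqF // mul1r in H2.
  idtac "hX".
  lra.
have hL : 1 < L.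
  rewrite /L mulrAC ltr_pdivlMr // mul1r.
  by rewrite -(ltr_pdivrMl _ _ hC1) mulrC.
pose Ws := words_le n.
pose N := size Ws.
pose hw (i : 'I_N) := word_val gr (nth [::] Ws i).
pose W h (z : bdry R gr S) := exists k, proj1_sig z k /\ dist (k n) h <= R0.
pose U (i : 'I_N) := [set z | exists e, 0 < e /\ forall z', d z z' < e -> W (hw i) z'].
have Hf : forall ih : 'I_N * bdry R gr S, exists z : bdry R gr S, W (hw ih.1) ih.2 ->
   exists k r, [/\ proj1_sig ih.2 k, dist (k n) (hw ih.1) <= R0, ray r,
     proj1_sig z = [set q | ray q /\ ray_equiv R gr S r q] &
     forall t, dist (r t) (mul (inv (hw ih.1)) (k (n + t)%N)) <= K1].
  move=> [i z] /=.
  case: (pselect (W (hw i) z)) => [[k [Hk Hkn]]|HW]; last by exists z.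
  have [g0 [_ Hkr _ _]] := bd_mem Hk.
  set h := hw i.
  pose p t := mul (inv h) (k (n + t)%N).
  have Hp : forall t t', (t <= t')%N -> dist (p t) (p t') = (t' - t)%:R.
    move=> t t' htt; rewrite /p wdist_mul; case: Hkr => _ ->; last by rewrite leq_add2l.
    by rewrite subnDl.
  have HR0 : dist one (p 0%N) <= R0.
    by rewrite /p -(gmulV gr h) wdist_mul addn0 wdist_sym.
  have [r [Hr Hrp]] := @ray_near p R0 Hp HR0.
  exists (exist _ [set q | ray q /\ ray_equiv R gr S r q] (ex_intro _ r (conj Hr erefl))) => _.
  by exists k, r; split.
have [f Hfs] := choice Hf.
exists N, U, (fun i z => f (i, z)), (fun _ => L).
split; [|split; [|split]].
-
  move=> i; apply/(Htop (U i)).2 => z [e [he HU]].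
  exists e; split => // z1 hz1.
  exists (e - d z z1); split; first lra.
  move=> z2 hz2; apply: HU; have := Hdtri z z1 z2; lra.
-
  move=> xi.
  have [g0 [Hg0 HA]] := proj2_sig xi.
  have [w [Hw1 Hw2 Hw3]] := wdist_attained one (g0 n).
  rewrite inv1 gmul1 in Hw2.
  rewrite wdist_sym ray_norm // in Hw3.
  have Hwin : List.In w Ws.
    by apply: in_words_le => //; rewrite -(ler_nat R) -Hw3.
  have [i [hi Hi]] := In_nth_ex _ [::] _ _ Hwin.
  exists (Ordinal hi).
  have Hh : hw (Ordinal hi) = g0 n by rewrite /hw /= Hi.
  exists (C1 * a `^ (- (n%:R + m))); split.
    by apply: mulr_gt0 => //; apply: powR_gt0; lra.
  move=> z hz; rewrite Hh.
  case: (pselect (xi = z)) => [<-|hne].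
    exists g0; split; first by rewrite HA; split => //; exact: requiv_refl.
    by rewrite wdist_xx /R0; lra.
  have [p [Hp [Hp1 _]]] := Hvis xi z hne.
  have hP0 : n%:R + m < p.
    have : C1 * a `^ (- p) < C1 * a `^ (- (n%:R + m)) by lra.
    rewrite ltr_pM2l // powR_ltE //; lra.
  have : ((n%:R + m)%:E < gprod_bd ob xi z)%E by rewrite Hp lte_fin.
  move=> /ereal_sup_gt [_ [x [y [Hx Hy ->]]] Hv].
  have [N1 HN1] := @liminf2_gt R (fun i j => gp ob (x i) (y j)) _ Hv.
  case: Hx => k [Hk Hxk]; case: Hy => k2 [Hk2 Hyk2].
  have Hk' := Hk; rewrite HA in Hk'; case: Hk' => Hkr Hg0k.
  have [_ [_ Hk2r _ _]] := bd_mem Hk2.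
  have [Nx HNx] := Hxk n%:R.
  have [Ny HNy] := Hyk2 n%:R.
  pose I := maxn (maxn N1 Nx) (maxn Ny n).
  have hI1 : (N1 <= I)%N by rewrite /I !leq_max leqnn.
  have hIx : (Nx <= I)%N by rewrite /I !leq_max leqnn !orbT.
  have hIy : (Ny <= I)%N by rewrite /I !leq_max leqnn !orbT.
  have hIn : (n <= I)%N by rewrite /I !leq_max leqnn !orbT.
  have G1 : n%:R - delta <= gp one (k n) (x I).
    apply: (@hyp2 n%:R one (k n) (k I) (x I)); first by rewrite gp_sym gp_ray.
    by rewrite gp_sym; apply: HNx.
  have G2 : n%:R - delta <= gp one (x I) (y I).
    have := HN1 I I hI1 hI1; have := gp_base ob one (x I) (y I).
    rewrite -/m; lra.
  have G3 : n%:R - delta <= gp one (y I) (k2 n).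
    apply: (@hyp2 n%:R one (y I) (k2 I) (k2 n)); first by apply: HNy.
    by rewrite gp_ray.
  have Gh := hyp3 G1 G2 G3.
  have Dk : dist (k n) (k2 n) <= 6 * delta.
    move: Gh; rewrite /gprod !ray_norm //; lra.
  have Dg : dist (g0 n) (k n) <= 4 * delta by apply: ray_close.
  exists k2; split => //.
  have := wdist_tri (k2 n) (k n) (g0 n).
  rewrite (wdist_sym (k2 n) (k n)) (wdist_sym (k n) (g0 n)) /R0; lra.
- by [].
-
  move=> i x y Hx Hy /=.
  have WU : forall z, U i z -> W (hw i) z.
    by move=> z [e [he HU]]; apply: HU; rewrite (Hdeq z z).2.
  case: (pselect (x = y)) => [<-|hne].
    by rewrite (Hdeq x x).2 // mulr0; apply: Hd0.
  have [k1 [r1 [Hk1 Hk1n Hr1 Hz1 Hr1p]]] := Hfs (i, x) (WU x Hx).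
  have [k2 [r2 [Hk2 Hk2n Hr2 Hz2 Hr2p]]] := Hfs (i, y) (WU y Hy).
  rewrite /= in Hk1 Hk1n Hz1 Hr1p Hk2 Hk2n Hz2 Hr2p.
  set h := hw i in Hk1n Hr1p Hk2n Hr2p.
  set z1 := f (i, x) in Hz1 *.
  set z2 := f (i, y) in Hz2 *.
  have [_ [_ Hk1r _ _]] := bd_mem Hk1.
  have [_ [_ Hk2r _ _]] := bd_mem Hk2.
  have [p [Hp [Hp1 Hp2]]] := Hvis x y hne.
  have hh : dist h one <= n%:R + R0.
    have := wdist_tri h (k1 n) one; rewrite ray_norm // (wdist_sym h (k1 n)); lra.
  have Key : (gprod_bd ob z1 z2 <= (p + (Cc - n%:R))%:E)%E.
    apply: ge_ereal_sup => _ [x' [y' [Hx' Hy' ->]]].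
    have Ta := tends_lift Hk1r Hr1 Hr1p Hz1 Hx'.
    have Tb := tends_lift Hk2r Hr2 Hr2p Hz2 Hy'.
    set av := fun i => mul h (x' i) in Ta.
    set bv := fun i => mul h (y' i) in Tb.
    have [Na HNa] := near_h Ta Hk1r Hk1n.
    have [Nb HNb] := near_h Tb Hk2r Hk2n.
    apply: le_trans (_ : _ <= liminf2 (fun i j => (gp ob (av i) (bv j))%:E) + (Cc - n%:R)%:E)%E _.
      apply: liminf2_shift; exists (maxn Na Nb) => i0 j0 hi hj.
      have Ea := HNa i0 (leq_trans (leq_maxl _ _) hi).
      have Eb := HNb j0 (leq_trans (leq_maxr _ _) hj).
      have B1 := gp_base ob one (x' i0) (y' j0).
      have E := gp_mul h one (x' i0) (y' j0); rewrite mulg1 in E.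
      have I0 := gp_ident h (av i0) (bv j0).
      have B2 := gp_base one ob (av i0) (bv j0).
      rewrite (wdist_sym one ob) -/m in B2.
      rewrite -/m in B1.
      rewrite /av /bv /= in Ea Eb I0 B2 *.
      have eCc : Cc = 2 * m + 3 * R0 + 4 * delta by [].
      lra.
    rewrite (EFinD p); apply: leeD2r; rewrite -Hp.
    apply: ereal_sup_ubound; exists av, bv; split => //.
    + by exists k1; split.
    + by exists k2; split.
  case: (pselect (z1 = z2)) => [Heq|hne'].
    have := gbd_self ob z2 (p + (Cc - n%:R) + 1).
    rewrite -{1}Heq => H; have := le_trans H Key; rewrite lee_fin; lra.
  have [p' [Hp' [Hp'1 _]]] := Hvis z1 z2 hne'.
  rewrite Hp' lee_fin in Key.
  apply: le_trans Hp'1.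
  have Lge0 : 0 <= L by lra.
  apply: le_trans (ler_wpM2l Lge0 Hp2) _.
  have E2 : L * (C2 * a `^ (- p)) = C1 * a `^ (n%:R - Cc - p).
    rewrite /L /X (powR_addE a (n%:R - Cc) (- p) ha).
    by field; rewrite gt_eqF.
  rewrite E2 ler_pM2l // powR_leE //; lra.
Qed.
End Hyp.

Theorem theorem6p6 (R : realType) (G : Type) (gr : group_on G) (S : seq G)
  (hS : symmetric_gen_set gr S) (hyp : hyperbolic_Cayley R gr S)
  (d : bdry R gr S -> bdry R gr S -> R) (hd : visual_metric d) :
  exists (N : nat) (U : 'I_N -> set (bdry R gr S))
         (f : 'I_N -> bdry R gr S -> bdry R gr S) (L : 'I_N -> R),
    (forall i, bd_open (U i)) /\
    (forall xi : bdry R gr S, exists i, U i xi) /\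
    (forall i, 1 < L i) /\
    (forall i x y, U i x -> U i y -> L i * d x y <= d (f i x) (f i y)).
Proof.
case: hyp => delta [hd0 four].
exact: (@main_sec R G gr S hS delta hd0 four d hd).
Qed.
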